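(* Let $Y$ be a sofic shift, $d$ a metric for the topology of $X_{\mathbb K(Y)}$, $x \in X_{\mathbb K(Y)}$ and $N\in \mathbb Z$. There is a periodic point $p \in Y$ and an element $x' \in X_{\mathbb K(Y)}$ such that $x'_i = x_i$ for all $i \geq N$ and $\lim_{i \to -\infty} d(\sigma^i(x'),\sigma^i(\alpha_Y(p))) = 0$. In particular, $x' \in \mathcal R(L_{\mathbb K(Y)})$.
   Context: For a sofic shift $Y\subseteq A^{\mathbb Z}$ and $y\in Y$, $F(y)=\{w\in Y[0,\infty): y_{(-\infty,-1]}w\in Y\}$, where $Y[0,\infty)=\{y_{[0,\infty)}:y\in Y\}$. The future cover $(\mathbb K(Y),L_{\mathbb K(Y)})$ is the labeled graph with vertices the distinct sets $F(y)$, $y\in Y$, and an edge labeled $a\in A$ from $F(y)$ to $F(z)$ exactly when $F(z)=\{w\in A^{\mathbb N}: aw\in F(y)\}$ (one edge per such pair and label); $X_{\mathbb K(Y)}$ is its edge shift with shift map $\sigma$, and $L_{\mathbb K(Y)}$ reads labels coordinatewise. $\alpha_Y:Y\to X_{\mathbb K(Y)}$ is the map such that, for each $i$, the $i$-th edge of $\alpha_Y(y)$ has source $F(\sigma^i(y))$ and label $y_i$ (so $L_{\mathbb K(Y)}(\alpha_Y(y))=y$). For $x\in X_{\mathbb K(Y)}$, $\mathbb U(x)=\{z:\exists N\ \forall i\le N,\ z_i=x_i\}$ (similarly in $Y$); $x$ is a regular ray if $L_{\mathbb K(Y)}$ maps $\mathbb U(x)$ onto $\mathbb U(L_{\mathbb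 K(Y)}(x))$, and $\mathcal R(L_{\mathbb K(Y)})$ is the set of regular rays. *)

(* Defs.v *)
From Stdlib Require Import ZArith Reals List.
Open Scope Z_scope.

Set Implicit Arguments.

Definition finite_type (T : Type) : Prop := exists l : list T, forall t, In t l.

Definition shiftn {B : Type} (k : Z) (x : Z -> B) : Z -> B := fun j => x (j + k).

Record LGraph (A : Type) := {
  lg_V : Type; lg_E : Type;
  lg_src : lg_E -> lg_V; lg_tgt : lg_E -> lg_V; lg_lab : lg_E -> A;
  lg_Vfin : finite_type lg_V; lg_Efin : finite_type lg_E }.

Definition is_bipath {A} (G : LGraph A) (x : Z -> lg_E G) : Prop :=
  forall i, lg_tgt G (x i) = lg_src G (x (i + 1)).

Definition is_sofic {A : Type} (Y : (Z -> A) -> Prop) : Prop :=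
  finite_type A /\
  exists G : LGraph A, forall y, Y y <->
    exists x, is_bipath G x /\ forall i, y i = lg_lab G (x i).

Definition Yplus {A} (Y : (Z -> A) -> Prop) (w : nat -> A) : Prop :=
  exists y, Y y /\ forall n : nat, w n = y (Z.of_nat n).

Definition glue {A} (y : Z -> A) (w : nat -> A) : Z -> A :=
  fun i => if i <? 0 then y i else w (Z.to_nat i).

Definition follower {A} (Y : (Z -> A) -> Prop) (y : Z -> A) : (nat -> A) -> Prop :=
  fun w => Yplus Y w /\ Y (glue y w).

Definition acons {A} (a : A) (w : nat -> A) : nat -> A :=
  fun n => match n with O => a | S m => w m end.

Definition is_vertex {A} (Y : (Z -> A) -> Prop) (S : (nat -> A) -> Prop) : Prop :=
  exists y, Y y /\ S = follower Y y.

(* an edge of K(Y) is determined by its source vertex and its label;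
   its target is {w | a w in S} *)
Definition KEdge (A : Type) : Type := ((nat -> A) -> Prop) * A.

Definition ke_src {A} (e : KEdge A) : (nat -> A) -> Prop := fst e.
Definition ke_lab {A} (e : KEdge A) : A := snd e.
Definition ke_tgt {A} (e : KEdge A) : (nat -> A) -> Prop :=
  fun w => fst e (acons (snd e) w).

Definition is_edge {A} (Y : (Z -> A) -> Prop) (e : KEdge A) : Prop :=
  is_vertex Y (ke_src e) /\ is_vertex Y (ke_tgt e).

Definition XK {A} (Y : (Z -> A) -> Prop) (x : Z -> KEdge A) : Prop :=
  forall i, is_edge Y (x i) /\ ke_tgt (x i) = ke_src (x (i + 1)).

Definition LK {A} (x : Z -> KEdge A) : Z -> A := fun i => ke_lab (x i).

Definition alphaY {A} (Y : (Z -> A) -> Prop) (y : Z -> A) : Z -> KEdge A :=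
  fun i => (follower Y (shiftn i y), y i).

Definition periodic {A} (p : Z -> A) : Prop :=
  exists k, 0 < k /\ forall i, p (i + k) = p i.

Definition Ul {B} (X : (Z -> B) -> Prop) (x : Z -> B) (z : Z -> B) : Prop :=
  X z /\ exists N, forall i, i <= N -> z i = x i.

Definition regular_ray {A} (Y : (Z -> A) -> Prop) (x : Z -> KEdge A) : Prop :=
  (forall z, Ul (XK Y) x z -> Ul Y (LK x) (LK z)) /\
  (forall y, Ul Y (LK x) y -> exists z, Ul (XK Y) x z /\ LK z = y).

(* d is a metric on X inducing the product topology (discrete factors) *)
Definition metric_on {B} (X : (Z -> B) -> Prop) (d : (Z -> B) -> (Z -> B) -> R) : Prop :=
  (forall x y, X x -> X y -> (0 <= d x y)%R) /\
  (forall x y, X x -> X y -> (d x y = 0%R <-> x = y)) /\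
  (forall x y, X x -> X y -> d x y = d y x) /\
  (forall x y z, X x -> X y -> X z -> (d x z <= d x y + d y z)%R).

Definition compatible_metric {B} (X : (Z -> B) -> Prop)
    (d : (Z -> B) -> (Z -> B) -> R) : Prop :=
  metric_on X d /\
  forall x, X x ->
    (forall eps, (0 < eps)%R -> exists M, forall y, X y ->
        (forall j, - M <= j <= M -> y j = x j) -> (d x y < eps)%R) /\
    (forall M, exists eps, (0 < eps)%R /\ forall y, X y ->
        (d x y < eps)%R -> forall j, - M <= j <= M -> y j = x j).

(* Main.v *)
Require Import Defs.
From Stdlib Require Import ZArith Reals Lia List Classical ClassicalEpsilon FunctionalExtensionality PropExtensionality.
From Stdlib Require FinFun.
Open Scope Z_scope.

Lemma pred_ext {T} (P Q : T -> Prop) : (forall t, P t <-> Q t) -> P = Q.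
Proof. intros H; apply functional_extensionality; intros t; apply propositional_extensionality; auto. Qed.

Lemma pick_list {T} (l : list T) (P : T -> nat -> Prop) :
  (forall t n m, P t n -> (m <= n)%nat -> P t m) ->
  (forall n, exists t, In t l /\ P t n) -> exists t, In t l /\ forall n, P t n.
Proof.
  intros Hm. induction l as [|a l IH]; intros H.
  - destruct (H 0%nat) as [t [[] _]].
  - destruct (classic (forall n, P a n)) as [Ha|Ha].
    + exists a; split; [left; reflexivity| exact Ha].
    + apply not_all_ex_not in Ha as [n0 Hn0].
      destruct IH as [t [Ht1 Ht2]].
      * intros n. destruct (H (Nat.max n n0)) as [t [[<-|Ht] Hp]].
        -- exfalso; apply Hn0; eapply Hm; [exact Hp| lia].
        -- exists t; split; [exact Ht| eapply Hm; [exact Hp| lia]].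
      * exists t; split; [right; exact Ht1| exact Ht2].
Qed.

Lemma bound_list {T} (l : list T) (Q : T -> nat -> Prop) :
  (forall t m m', (m <= m')%nat -> Q t m -> Q t m') ->
  (forall t, In t l -> exists m, Q t m) -> exists M, forall t, In t l -> Q t M.
Proof.
  intros Hm. induction l as [|a l IH]; intros H.
  - exists 0%nat; intros t [].
  - destruct (H a (or_introl eq_refl)) as [ma Ha].
    destruct IH as [M HM]. { intros t Ht; apply H; right; exact Ht. }
    exists (Nat.max ma M). intros t [<-|Ht].
    + eapply Hm; [|exact Ha]; lia.
    + eapply Hm; [|apply HM; exact Ht]; lia.
Qed.

Lemma bound_nat (n : nat) (Q : nat -> Z -> Prop) :
  (forall t m m', m <= m' -> Q t m -> Q t m') ->
  (forall t, (t < n)%nat -> exists m, Q t m) -> exists M, forall t, (t < n)%nat -> Q t M.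
Proof.
  intros Hm. induction n as [|n IH]; intros H.
  - exists 0; intros t Ht; lia.
  - destruct (H n ltac:(lia)) as [mn Hn].
    destruct IH as [M HM]. { intros t Ht; apply H; lia. }
    exists (Z.max mn M). intros t Ht. destruct (Nat.eq_dec t n) as [->|Hne].
    + eapply Hm; [|exact Hn]; lia.
    + eapply Hm; [|apply HM; lia]; lia.
Qed.

Lemma php {T} (l : list T) (f : nat -> T) : (forall k, In (f k) l) -> exists a b, (a < b)%nat /\ f a = f b.
Proof.
  intros H. apply NNPP. intros Hn.
  assert (Hinj : forall a b, f a = f b -> a = b).
  { intros a b Hab. destruct (Nat.lt_trichotomy a b) as [Hlt|[Heq|Hgt]]; auto.
    - exfalso; apply Hn; exists a, b; auto.
    - exfalso; apply Hn; exists b, a; auto. }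
  assert (Hnd : NoDup (map f (seq 0 (S (length l))))).
  { apply FinFun.Injective_map_NoDup; [exact Hinj| apply seq_NoDup]. }
  apply NoDup_incl_length with (l' := l) in Hnd.
  - rewrite length_map, length_seq in Hnd. lia.
  - intros t Ht. apply in_map_iff in Ht as [k [<- _]]. apply H.
Qed.

Fixpoint allL {T} (l : list T) (n : nat) : list (list T) :=
  match n with O => nil :: nil | S m => flat_map (fun v => map (cons v) (allL l m)) l end.

Lemma allL_in {T} (l : list T) : (forall t, In t l) -> forall c, In c (allL l (length c)).
Proof.
  intros Hl c; induction c as [|v c IH]; simpl.
  - left; reflexivity.
  - apply in_flat_map. exists v. split; [apply Hl|]. apply in_map. exact IH.
Qed.

Lemma map_eq_in {T U} (f g : T -> U) l : map f l = map g l -> forall x, In x l -> f x = g x.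
Proof.
  induction l as [|a l IH]; simpl; intros H x Hx; [contradiction|].
  injection H as H1 H2. destruct Hx as [<-|Hx]; auto.
Qed.

Section Konig.
Variables (T : Type) (l : list T) (Hl : forall t, In t l) (init : T -> Prop) (step : nat -> T -> T -> Prop).

Definition kgood (k : nat) (t : T) : Prop :=
  forall n, exists s : nat -> T, s O = t /\ forall j, (j < n)%nat -> step (k + j) (s j) (s (S j)).

Lemma kgood_start : (forall n, exists s : nat -> T, init (s O) /\ forall j, (j < n)%nat -> step j (s j) (s (S j))) -> exists t, init t /\ kgood 0 t.
Proof.
  intros H.
  destruct (pick_list l (fun t n => init t /\ exists s : nat -> T, s O = t /\ forall j, (j < n)%nat -> step (0 + j) (s j) (s (S j)))) as [t [_ Ht]].
  - intros t n m [Hi [s [Hs Hst]]] Hmn. split; [exact Hi|]. exists s; split; [exact Hs|]. intros j Hj; apply Hst; lia.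
  - intros n. destruct (H n) as [s [Hi Hs]]. exists (s O); split; [apply Hl|]. split; [exact Hi|]. exists s; split; [reflexivity|]. intros j Hj; apply Hs; exact Hj.
  - exists t. split. apply (Ht 0%nat). intros n. destruct (Ht n) as [_ H']. exact H'.
Qed.

Lemma kgood_next k t : kgood k t -> exists t', step k t t' /\ kgood (S k) t'.
Proof.
  intros H.
  destruct (pick_list l (fun t' n => step k t t' /\ exists s : nat -> T, s O = t' /\ forall j, (j < n)%nat -> step (S k + j) (s j) (s (S j)))) as [t' [_ Ht']].
  - intros t' n m [Hi [s [Hs Hst]]] Hmn. split; [exact Hi|]. exists s; split; [exact Hs|]. intros j Hj; apply Hst; lia.
  - intros n. destruct (H (S n)) as [s [Hs0 Hs]]. exists (s 1%nat). split; [apply Hl|]. split.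
    + specialize (Hs 0%nat ltac:(lia)). rewrite Nat.add_0_r, Hs0 in Hs. exact Hs.
    + exists (fun j => s (S j)). split; [reflexivity|]. intros j Hj. specialize (Hs (S j) ltac:(lia)). rewrite Nat.add_succ_r in Hs. exact Hs.
  - exists t'. split; [apply (Ht' 0%nat)|]. intros n; apply (Ht' n).
Qed.

Lemma konig : (forall n, exists s : nat -> T, init (s O) /\ forall j, (j < n)%nat -> step j (s j) (s (S j))) ->
  exists f : nat -> T, init (f O) /\ forall k, step k (f k) (f (S k)).
Proof.
  intros H. destruct (kgood_start H) as [t0 [Hi0 Hg0]].
  pose (g := fun k t => match excluded_middle_informative (kgood k t) with
                       | left Hk => proj1_sig (constructive_indefinite_description _ (kgood_next k t Hk))
                       | right _ => t end).
  assert (Hg : forall k t, kgood k t -> step k t (g k t) /\ kgood (S k) (g k t)).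
  { intros k t Hk. unfold g. destruct (excluded_middle_informative (kgood k t)) as [Hk'|Hk'].
    - exact (proj2_sig (constructive_indefinite_description _ (kgood_next k t Hk'))).
    - contradiction. }
  pose (f := fix f n := match n with O => t0 | S m => g m (f m) end).
  assert (Hf : forall n, kgood n (f n)).
  { induction n; [exact Hg0| apply (Hg n (f n) IHn)]. }
  exists f. split; [exact Hi0|]. intros k. exact (proj1 (Hg k (f k) (Hf k))).
Qed.
End Konig.

Lemma shiftn_shiftn {B} (a b : Z) (y : Z -> B) : shiftn a (shiftn b y) = shiftn (a + b) y.
Proof. apply functional_extensionality; intros j; unfold shiftn; f_equal; lia. Qed.
Lemma shiftn0 {B} (y : Z -> B) : shiftn 0 y = y.
Proof. apply functional_extensionality; intros j; unfold shiftn; f_equal; lia. Qed.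

Lemma XK_shift {B} (Y : (Z -> B) -> Prop) c k : XK Y c -> XK Y (shiftn k c).
Proof. intros H i. unfold shiftn. destruct (H (i + k)) as [He Hc]. split; [exact He|]. rewrite Hc. f_equal. f_equal. lia. Qed.

Lemma follower_iff {B} (Y : (Z -> B) -> Prop) y w : follower Y y w <-> Y (glue y w).
Proof.
  split; [intros [_ H]; exact H|]. intros H. split; [|exact H].
  exists (glue y w). split; [exact H|]. intros n. unfold glue.
  destruct (Z.ltb_spec (Z.of_nat n) 0); [lia|]. rewrite Nat2Z.id. reflexivity.
Qed.

Lemma follower_past {B} (Y : (Z -> B) -> Prop) a b : (forall r, r < 0 -> a r = b r) -> follower Y a = follower Y b.
Proof.
  intros H. apply functional_extensionality; intros w. unfold follower.
  replace (glue a w) with (glue b w); [reflexivity|].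
  apply functional_extensionality; intros r. unfold glue. destruct (Z.ltb_spec r 0); [symmetry; apply H; lia| reflexivity].
Qed.

Lemma alpha_agree {B} (Y : (Z -> B) -> Prop) u v K : (forall r, r < K -> u r = v r) -> forall i, i < K -> alphaY Y u i = alphaY Y v i.
Proof.
  intros H i Hi. unfold alphaY. f_equal.
  - apply follower_past. intros r Hr. unfold shiftn. apply H; lia.
  - apply H; lia.
Qed.

Lemma alpha_shift {B} (Y : (Z -> B) -> Prop) p k i : alphaY Y (shiftn k p) i = alphaY Y p (i + k).
Proof. unfold alphaY. rewrite shiftn_shiftn. reflexivity. Qed.

Lemma glue_self {B} (y : Z -> B) : glue y (fun k => y (Z.of_nat k)) = y.
Proof.
  apply functional_extensionality; intros r; unfold glue. destruct (Z.ltb_spec r 0); [reflexivity|].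
  rewrite Z2Nat.id by lia; reflexivity.
Qed.

Definition appn {B} (n : nat) (s u : nat -> B) : nat -> B := fun k => if (k <? n)%nat then s k else u (k - n)%nat.

Lemma appn0 {B} (s u : nat -> B) : appn 0 s u = u.
Proof.
  apply functional_extensionality; intros k. unfold appn.
  replace (k <? 0)%nat with false by (destruct k; reflexivity). rewrite Nat.sub_0_r. reflexivity.
Qed.

Lemma appn_acons {B} n (s u : nat -> B) : appn n s (acons (s n) u) = appn (S n) s u.
Proof.
  apply functional_extensionality; intros k. unfold appn.
  destruct (Nat.ltb_spec k n); destruct (Nat.ltb_spec k (S n)); try lia; try reflexivity.
  - assert (k = n) by lia. subst k. rewrite Nat.sub_diag. reflexivity.
  - replace (k - n)%nat with (S (k - S n)) by lia. reflexivity.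
Qed.

Definition wrap (i j r : Z) : Z := i + (r - i) mod (j - i).

Lemma wrap_bounds i j r : i < j -> i <= wrap i j r < j.
Proof. intros H. unfold wrap. pose proof (Z.mod_pos_bound (r - i) (j - i) ltac:(lia)). lia. Qed.

Lemma wrap_step i j r : i < j ->
  (wrap i j r < j - 1 /\ wrap i j (r+1) = wrap i j r + 1) \/ (wrap i j r = j - 1 /\ wrap i j (r+1) = i).
Proof.
  intros H. unfold wrap. pose proof (Z.mod_pos_bound (r - i) (j - i) ltac:(lia)).
  replace (r + 1 - i) with ((r - i) + 1) by lia.
  rewrite <- Z.add_mod_idemp_l by lia.
  destruct (Z.eq_dec ((r - i) mod (j - i)) (j - i - 1)) as [e|ne].
  - right. rewrite e. replace (j - i - 1 + 1) with (j - i) by lia. rewrite Z.mod_same by lia. lia.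
  - left. rewrite (Z.mod_small ((r - i) mod (j - i) + 1)) by lia. lia.
Qed.

Lemma wrap_id i j r : i <= r < j -> wrap i j r = r.
Proof. intros H. unfold wrap. rewrite Z.mod_small by lia. lia. Qed.

Lemma wrap_period i j r : i < j -> wrap i j (r + (j - i)) = wrap i j r.
Proof. intros H. unfold wrap. replace (r + (j - i) - i) with ((r - i) + 1 * (j - i)) by lia. rewrite Z_mod_plus_full. reflexivity. Qed.

Section Graph.
Context {A : Type} (G : LGraph A).
Local Notation E := (lg_E G).
Local Notation V := (lg_V G).
Local Notation src := (lg_src G).
Local Notation tgt := (lg_tgt G).
Local Notation lab := (lg_lab G).

Definition YG (y : Z -> A) : Prop := exists x, is_bipath G x /\ forall i, y i = lab (x i).

Lemma YG_shift y k : YG y -> YG (shiftn k y).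
Proof.
  intros [x [Hb Hl]]. exists (shiftn k x). split.
  - intros i. unfold shiftn. rewrite Hb. f_equal. f_equal. lia.
  - intros i. unfold shiftn. apply Hl.
Qed.

Lemma YG_shift_iff y k : YG (shiftn k y) <-> YG y.
Proof.
  split; [|apply YG_shift]. intros H. apply (YG_shift _ (-k)) in H. rewrite shiftn_shiftn in H.
  replace (-k + k) with 0 in H by lia. rewrite shiftn0 in H. exact H.
Qed.

Lemma follower_tgt y i w : follower YG (shiftn i y) (acons (y i) w) <-> follower YG (shiftn (i+1) y) w.
Proof.
  rewrite !follower_iff.
  replace (glue (shiftn i y) (acons (y i) w)) with (shiftn (-1) (glue (shiftn (i+1) y) w)).
  - apply YG_shift_iff.
  - apply functional_extensionality; intros k. unfold glue, shiftn.
    destruct (Z.ltb_spec k 0); destruct (Z.ltb_spec (k + -1) 0).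
    + f_equal; lia.
    + lia.
    + assert (k = 0) by lia. subst k. replace (0 + -1 + (i + 1)) with i by lia. reflexivity.
    + replace (Z.to_nat k) with (S (Z.to_nat (k + -1))) by lia. reflexivity.
Qed.

Lemma tgt_alpha y i : ke_tgt (alphaY YG y i) = follower YG (shiftn (i+1) y).
Proof. apply pred_ext. intros w. exact (follower_tgt y i w). Qed.

Lemma alpha_XK y : YG y -> XK YG (alphaY YG y).
Proof.
  intros Hy i. split. split.
  - exists (shiftn i y). split; [apply YG_shift; exact Hy| reflexivity].
  - rewrite tgt_alpha. exists (shiftn (i+1) y). split; [apply YG_shift; exact Hy| reflexivity].
  - rewrite tgt_alpha. reflexivity.
Qed.

Definition LPath (y : Z -> A) (b : V) : Prop :=
  exists pi : Z -> E, (forall i, i < -1 -> tgt (pi i) = src (pi (i+1))) /\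
    (forall i, i < 0 -> lab (pi i) = y i) /\ tgt (pi (-1)) = b.
Definition RPath (w : nat -> A) (b : V) : Prop :=
  exists f : nat -> E, src (f O) = b /\ forall n, tgt (f n) = src (f (S n)) /\ lab (f n) = w n.
Definition LFin (y : Z -> A) (m : nat) (b : V) : Prop :=
  exists pi : Z -> E, (forall i, - Z.of_nat (S m) <= i < -1 -> tgt (pi i) = src (pi (i+1))) /\
    (forall i, - Z.of_nat (S m) <= i < 0 -> lab (pi i) = y i) /\ tgt (pi (-1)) = b.
Definition RFin (w : nat -> A) (n : nat) (b : V) : Prop :=
  exists s : nat -> E, (src (s O) = b /\ lab (s O) = w O) /\
    forall j, (j < n)%nat -> (tgt (s j) = src (s (S j)) /\ lab (s (S j)) = w (S j)).

Lemma LFin_mono y m m' b : (m <= m')%nat -> LFin y m' b -> LFin y m b.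
Proof.
  intros H [pi [H1 [H2 H3]]]. exists pi. split; [|split].
  - intros i Hi; apply H1; lia.
  - intros i Hi; apply H2; lia.
  - exact H3.
Qed.

Lemma RFin_mono w n m b : (m <= n)%nat -> RFin w n b -> RFin w m b.
Proof.
  intros H [s [H1 H2]]. exists s. split; [exact H1|]. intros j Hj; apply H2; lia.
Qed.

Lemma glue_iff y w : YG (glue y w) <-> exists b, LPath y b /\ RPath w b.
Proof.
  split.
  - intros [x [Hb Hl]]. exists (src (x 0)). split.
    + exists x. split; [|split].
      * intros i _. apply Hb.
      * intros i Hi. rewrite <- Hl. unfold glue. destruct (Z.ltb_spec i 0); [reflexivity| lia].
      * exact (Hb (-1)).
    + exists (fun n => x (Z.of_nat n)). split; [reflexivity|]. intros n. cbv beta. split.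
      * rewrite Nat2Z.inj_succ, <- Z.add_1_r. apply Hb.
      * rewrite <- Hl. unfold glue. destruct (Z.ltb_spec (Z.of_nat n) 0); [lia|]. rewrite Nat2Z.id. reflexivity.
  - intros [b [[pi [Hc [Hl Ht]]] [f [Hf0 Hf]]]].
    exists (fun i => if i <? 0 then pi i else f (Z.to_nat i)). split.
    + intros i. cbv beta. destruct (Z.ltb_spec i 0); destruct (Z.ltb_spec (i+1) 0).
      * apply Hc; lia.
      * assert (i = -1) by lia. subst i. rewrite Ht. rewrite <- Hf0. reflexivity.
      * lia.
      * replace (Z.to_nat (i+1)) with (S (Z.to_nat i)) by lia. exact (proj1 (Hf _)).
    + intros i. unfold glue. cbv beta. destruct (Z.ltb_spec i 0).
      * symmetry; apply Hl; lia.
      * symmetry; exact (proj2 (Hf _)).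
Qed.

Lemma follower_LP y y' : (forall b, LPath y b <-> LPath y' b) -> follower YG y = follower YG y'.
Proof.
  intros H. apply pred_ext. intros w. rewrite !follower_iff, !glue_iff.
  split; intros [b [H1 H2]]; exists b; split; try exact H2.
  - apply (proj1 (H b)); exact H1.
  - apply (proj2 (H b)); exact H1.
Qed.

Lemma left_konig y b : (forall m, LFin y m b) -> LPath y b.
Proof.
  intros H. destruct (lg_Efin G) as [le Hle].
  destruct (konig E le Hle (fun e => tgt e = b /\ lab e = y (-1)) (fun k e e' => tgt e' = src e /\ lab e' = y (-2 - Z.of_nat k))) as [f [[Hf0 Hl0] Hf]].
  - intros n. destruct (H n) as [pi [Hc [Hl Ht]]].
    exists (fun k => pi (-1 - Z.of_nat k)). cbv beta. split.
    + replace (-1 - Z.of_nat 0) with (-1) by lia. split; [exact Ht| apply Hl; lia].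
    + intros k Hk. split.
      * assert (E1 : -1 - Z.of_nat k = (-1 - Z.of_nat (S k)) + 1) by lia. rewrite E1. apply Hc. lia.
      * rewrite Hl by lia. f_equal. lia.
  - exists (fun r => f (Z.to_nat (-1 - r))). cbv beta. split; [|split].
    + intros r Hr. replace (Z.to_nat (-1 - r)) with (S (Z.to_nat (-1 - (r + 1)))) by lia. exact (proj1 (Hf _)).
    + intros r Hr. destruct (Z.to_nat (-1 - r)) eqn:Ek.
      * assert (r = -1) by lia. subst. exact Hl0.
      * rewrite (proj2 (Hf n)). f_equal. lia.
    + exact Hf0.
Qed.

Lemma right_konig w b : (forall n, RFin w n b) -> RPath w b.
Proof.
  intros H. destruct (lg_Efin G) as [le Hle].
  destruct (konig E le Hle (fun e => src e = b /\ lab e = w O) (fun k e e' => tgt e = src e' /\ lab e' = w (S k))) as [f [[Hf0 Hl0] Hf]].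
  - exact H.
  - exists f. split; [exact Hf0|]. intros n. split; [exact (proj1 (Hf n))|]. destruct n; [exact Hl0| exact (proj2 (Hf n))].
Qed.

Lemma closed_XK (c : Z -> KEdge A) (q : Z -> A) :
  XK YG c -> YG q -> (forall i, i < 0 -> c i = alphaY YG q i) -> YG (LK c).
Proof.
  intros Hc Hq Hcq.
  destruct (lg_Vfin G) as [lv Hlv].
  pose (ell := fun n : nat => ke_lab (c (Z.of_nat n))).
  assert (H0 : ke_src (c 0) = follower YG q).
  { destruct (Hc (-1)) as [_ Ht]. change (ke_tgt (c (-1)) = ke_src (c 0)) in Ht.
    rewrite <- Ht, Hcq by lia. rewrite tgt_alpha. replace (-1 + 1) with 0 by lia. rewrite shiftn0. reflexivity. }
  assert (Happ : forall n u, ke_src (c (Z.of_nat n)) u -> follower YG q (appn n ell u)).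
  { induction n as [|n IH]; intros u Hu.
    - rewrite appn0. rewrite <- H0. exact Hu.
    - rewrite <- appn_acons. apply IH.
      destruct (Hc (Z.of_nat n)) as [_ Ht].
      change (ke_src (c (Z.of_nat n)) (acons (ell n) u)) with (ke_tgt (c (Z.of_nat n)) u).
      rewrite Ht. rewrite Nat2Z.inj_succ in Hu. rewrite <- Z.add_1_r in Hu. exact Hu. }
  assert (Hfin : forall n, exists b, In b lv /\ (LPath q b /\ RFin ell n b)).
  { intros n. destruct (Hc (Z.of_nat (S n))) as [[Hv _] _]. destruct Hv as [y' [Hy' Heq]].
    assert (Hu : ke_src (c (Z.of_nat (S n))) (fun k => y' (Z.of_nat k))).
    { rewrite Heq. apply follower_iff. rewrite glue_self. exact Hy'. }
    apply Happ in Hu. apply follower_iff, glue_iff in Hu as [b [Hb [f [Hf0 Hf]]]].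
    exists b. split; [apply Hlv|]. split; [exact Hb|].
    exists f. split.
    - split; [exact Hf0|]. rewrite (proj2 (Hf 0%nat)). reflexivity.
    - intros jj Hjj. split; [exact (proj1 (Hf _))|]. rewrite (proj2 (Hf (S jj))). unfold appn.
      destruct (Nat.ltb_spec (S jj) (S n)); [reflexivity| lia]. }
  destruct (pick_list lv (fun b n => LPath q b /\ RFin ell n b)) as [b [_ Hb]].
  - intros b n m [H1 H2] Hmn. split; [exact H1| eapply RFin_mono; eauto].
  - exact Hfin.
  - assert (HR : RPath ell b) by (apply right_konig; intros n; exact (proj2 (Hb n))).
    assert (HL : LPath q b) by exact (proj1 (Hb 0%nat)).
    assert (HY : YG (glue q ell)) by (apply glue_iff; exists b; split; assumption).
    replace (LK c) with (glue q ell); [exact HY|].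
    apply functional_extensionality; intros r. unfold glue, LK, ell.
    destruct (Z.ltb_spec r 0).
    + rewrite Hcq by lia. reflexivity.
    + rewrite Z2Nat.id by lia. reflexivity.
Qed.

Lemma cyc_full (i j R : Z) (s : Z -> E) : i < j -> j <= R ->
  (forall r, r < R -> tgt (s r) = src (s (r+1))) -> src (s i) = src (s j) ->
  forall r, tgt (s (wrap i j r)) = src (s (wrap i j (r+1))).
Proof.
  intros Hij HjR Hc Hs r. destruct (wrap_step i j r Hij) as [[H1 H2]|[H1 H2]].
  - rewrite H2. apply Hc. lia.
  - rewrite H2, H1, Hs. assert (Hc' := Hc (j-1) ltac:(lia)). replace (j - 1 + 1) with j in Hc' by lia. exact Hc'.
Qed.

Definition cyc (i j : Z) (s : Z -> E) : Z -> E := fun r => if r <? i then s (wrap i j r) else s r.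

Lemma cyc_conn i j R s : i < j -> j <= R -> (forall r, r < R -> tgt (s r) = src (s (r+1))) -> src (s i) = src (s j) ->
  forall r, r < R -> tgt (cyc i j s r) = src (cyc i j s (r+1)).
Proof.
  intros Hij HjR Hc Hs r Hr. unfold cyc.
  destruct (Z.ltb_spec r i) as [H1|H1]; destruct (Z.ltb_spec (r+1) i) as [H2|H2].
  - apply (cyc_full i j R); auto.
  - rewrite <- (wrap_id i j (r+1)) by lia. apply (cyc_full i j R); auto.
  - lia.
  - apply Hc; lia.
Qed.
End Graph.

Section Core.
Context {A : Type} (G : LGraph A).
Local Notation E := (lg_E G).
Local Notation V := (lg_V G).
Local Notation src := (lg_src G).
Local Notation tgt := (lg_tgt G).
Local Notation lab := (lg_lab G).

Lemma core0 y : YG G y -> exists p z K, YG G p /\ periodic p /\ YG G z /\ (forall r, r < K -> z r = p r) /\ follower (YG G) z = follower (YG G) y.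
Proof.
  intros Hy.
  destruct (lg_Vfin G) as [lv Hlv].
  assert (HM : exists M : nat, forall b, LFin G y M b -> LPath G y b).
  { destruct (bound_list lv (fun b m => LFin G y m b -> LPath G y b)) as [M HM].
    - intros b m m' Hmm' Hq Hf. apply Hq. exact (LFin_mono G y m m' b Hmm' Hf).
    - intros b _. destruct (classic (LPath G y b)) as [Hb|Hb].
      + exists 0%nat; intros _; exact Hb.
      + assert (Hn : ~ forall m, LFin G y m b) by (intros Hall; apply Hb, left_konig, Hall).
        apply not_all_ex_not in Hn as [m Hm]. exists m. intros Hf; contradiction.
    - exists M. intros b. apply HM, Hlv. }
  destruct HM as [M HM].
  destruct Hy as [pi [Hpb Hpl]].
  assert (Hsig : forall v, exists s : Z -> E, LPath G y v -> (forall r, r < -1 -> tgt (s r) = src (s (r+1))) /\ (forall r, r < 0 -> lab (s r) = y r) /\ tgt (s (-1)) = v).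
  { intros v. destruct (classic (LPath G y v)) as [[s Hs]|Hn].
    - exists s; intros _; exact Hs.
    - exists pi; intros H; contradiction. }
  pose (sig := fun v => proj1_sig (constructive_indefinite_description _ (Hsig v))).
  assert (Hsig' : forall v, LPath G y v -> (forall r, r < -1 -> tgt (sig v r) = src (sig v (r+1))) /\ (forall r, r < 0 -> lab (sig v r) = y r) /\ tgt (sig v (-1)) = v).
  { intros v. exact (proj2_sig (constructive_indefinite_description _ (Hsig v))). }
  pose (fam := pi :: map sig lv).
  pose (pos := fun k : nat => - Z.of_nat M - 1 - Z.of_nat k).
  destruct (php (allL lv (length fam)) (fun k => map (fun s => src (s (pos k))) fam)) as [a [b [Hab Hcode]]].
  { intros k. rewrite <- (length_map (fun s => src (s (pos k))) fam). apply allL_in. exact Hlv. }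
  pose (i := pos b). pose (j := pos a).
  assert (Hij : i < j) by (unfold i, j, pos; lia).
  assert (Hj : j <= - Z.of_nat M - 1) by (unfold j, pos; lia).
  assert (Hi : i < - Z.of_nat M - 1) by (unfold i, pos; lia).
  assert (Hsame : forall s, In s fam -> src (s i) = src (s j)).
  { intros s Hs. symmetry. exact (map_eq_in _ _ fam Hcode s Hs). }
  assert (Hpin : In pi fam) by (left; reflexivity).
  pose (p := fun r => y (wrap i j r)).
  pose (z := fun r => if r <? i then p r else y r).
  exists p, z, i.
  split; [| split; [| split; [| split]]].
  - exists (fun r => pi (wrap i j r)). split.
    + intros r. exact (cyc_full G i j j pi Hij (Z.le_refl j) (fun r _ => Hpb r) (Hsame pi Hpin) r).
    + intros r. apply Hpl.
  - exists (j - i). split; [lia|]. intros r. unfold p. rewrite wrap_period by exact Hij. reflexivity.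
  - exists (cyc G i j pi). split.
    + intros r. apply (cyc_conn G i j (Z.max j (r+1)) pi Hij ltac:(lia) (fun r' _ => Hpb r') (Hsame pi Hpin)); lia.
    + intros r. unfold z, cyc. destruct (Z.ltb_spec r i); [unfold p; apply Hpl | apply Hpl].
  - intros r Hr. unfold z. destruct (Z.ltb_spec r i); [reflexivity| lia].
  - apply (follower_LP G). intros b0. split.
    + intros [tau [Htc [Htl Htt]]]. apply HM. exists tau. split; [|split].
      * intros r Hr; apply Htc; lia.
      * intros r Hr. rewrite Htl by lia. unfold z. destruct (Z.ltb_spec r i); [lia| reflexivity].
      * exact Htt.
    + intros Hb0. destruct (Hsig' b0 Hb0) as [Hc [Hl Ht]].
      assert (Hin : In (sig b0) fam) by (right; apply in_map; apply Hlv).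
      exists (cyc G i j (sig b0)). split; [|split].
      * intros r Hr. apply (cyc_conn G i j (-1) _ Hij ltac:(lia) Hc (Hsame _ Hin)); lia.
      * intros r Hr. unfold cyc, z. destruct (Z.ltb_spec r i).
        -- unfold p. apply Hl. pose proof (wrap_bounds i j r Hij). lia.
        -- apply Hl; lia.
      * unfold cyc. destruct (Z.ltb_spec (-1) i); [lia| exact Ht].
Qed.
End Core.

Theorem lemma2p16 (A : Type) (Y : (Z -> A) -> Prop)
  (d : (Z -> KEdge A) -> (Z -> KEdge A) -> R) (x : Z -> KEdge A) (N : Z) :
  is_sofic Y -> compatible_metric (XK Y) d -> XK Y x ->
  exists p x', Y p /\ periodic p /\ XK Y x' /\
    (forall i, N <= i -> x' i = x i) /\
    (forall eps, (0 < eps)%R -> exists I, forall i, i <= I ->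
       (Rabs (d (shiftn i x') (shiftn i (alphaY Y p))) < eps)%R) /\
    regular_ray Y x'.
Proof.
  intros [_ [G HG]] Hd Hx.
  assert (HY : Y = YG G) by (apply pred_ext; intros t; apply HG).
  subst Y.
  destruct Hd as [[Hnn [Hz0 [Hsym Htri]]] Hcomp].
  destruct (Hx N) as [[[y0 [Hy0 Hsrc]] _] _].
  destruct (core0 G y0 Hy0) as [p0 [z0 [K0 [Hp0 [Hper0 [Hz0' [Hzp0 Hf0]]]]]]].
  pose (z := shiftn (-N) z0). pose (p := shiftn (-N) p0). pose (K := K0 + N).
  assert (Hz : YG G z) by (apply YG_shift; exact Hz0').
  assert (Hp : YG G p) by (apply YG_shift; exact Hp0).
  assert (Hper : periodic p).
  { destruct Hper0 as [k [Hk Hk']]. exists k. split; [exact Hk|]. intros r. unfold p, shiftn.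
    replace (r + k + -N) with ((r + -N) + k) by lia. apply Hk'. }
  assert (Hzp : forall r, r < K -> z r = p r).
  { intros r Hr. unfold z, p, shiftn. apply Hzp0. unfold K in Hr. lia. }
  assert (HfN : follower (YG G) (shiftn N z) = ke_src (x N)).
  { rewrite Hsrc, <- Hf0. unfold z. rewrite shiftn_shiftn. replace (N + -N) with 0 by lia. rewrite shiftn0. reflexivity. }
  pose (x' := fun i => if i <? N then alphaY (YG G) z i else x i).
  assert (Hx'def : forall i, x' i = if i <? N then alphaY (YG G) z i else x i) by reflexivity.
  pose (K' := Z.min K N).
  assert (Hx'a : forall i, i < K' -> x' i = alphaY (YG G) p i).
  { intros i Hi. rewrite Hx'def. destruct (Z.ltb_spec i N); [|unfold K' in Hi; lia].
    apply (alpha_agree _ z p K); [exact Hzp| unfold K' in Hi; lia]. }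
  assert (HX' : XK (YG G) x').
  { intros i. rewrite !Hx'def. destruct (Z.ltb_spec i N).
    - pose proof (alpha_XK G z Hz i) as [He Hc]. split; [exact He|].
      destruct (Z.ltb_spec (i+1) N).
      + exact Hc.
      + rewrite tgt_alpha. replace (i+1) with N by lia. rewrite HfN. reflexivity.
    - destruct (Z.ltb_spec (i+1) N); [lia|]. exact (Hx i). }
  assert (HpXK : XK (YG G) (alphaY (YG G) p)) by (apply alpha_XK; exact Hp).
  assert (Hasym : forall eps, (0 < eps)%R -> exists I, forall i, i <= I ->
       (Rabs (d (shiftn i x') (shiftn i (alphaY (YG G) p))) < eps)%R).
  { destruct Hper as [L [HL HperL]].
    assert (Hpn : forall (n : nat) r, p (r + L * Z.of_nat n) = p r).
    { induction n; intros r.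
      - rewrite Z.mul_0_r, Z.add_0_r. reflexivity.
      - rewrite Nat2Z.inj_succ. unfold Z.succ.
        replace (r + L * (Z.of_nat n + 1)) with ((r + L * Z.of_nat n) + L) by ring.
        rewrite HperL. apply IHn. }
    assert (Hpq : forall q r, p (r + L * q) = p r).
    { intros q r. destruct (Z_le_gt_dec 0 q).
      - rewrite <- (Z2Nat.id q) by lia. apply Hpn.
      - rewrite <- (Hpn (Z.to_nat (-q)) (r + L * q)). f_equal. rewrite Z2Nat.id by lia. ring. }
    assert (Hsp : forall q r, shiftn (r + L * q) p = shiftn r p).
    { intros q r. apply functional_extensionality; intros jj. unfold shiftn.
      replace (jj + (r + L * q)) with ((jj + r) + L * q) by ring. apply Hpq. }
    assert (Hap : forall q r, alphaY (YG G) p (r + L * q) = alphaY (YG G) p r).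
    { intros q r. unfold alphaY. rewrite Hsp, Hpq. reflexivity. }
    intros eps Heps.
    destruct (bound_nat (Z.to_nat L) (fun t m => forall y, XK (YG G) y ->
        (forall jj, - m <= jj <= m -> y jj = shiftn (Z.of_nat t) (alphaY (YG G) p) jj) ->
        (d (shiftn (Z.of_nat t) (alphaY (YG G) p)) y < eps)%R)) as [M HM].
    - intros t m m' Hmm' Hq y Hy Hag. apply Hq; [exact Hy|]. intros jj Hjj. apply Hag; lia.
    - intros t _. destruct (Hcomp (shiftn (Z.of_nat t) (alphaY (YG G) p)) (XK_shift _ _ _ HpXK)) as [H1 _].
      destruct (H1 eps Heps) as [M HM]. exists M. exact HM.
    - exists (K' - Z.abs M - 1). intros i Hi.
      assert (HLm := Z.mod_pos_bound i L HL).
      pose (t := Z.to_nat (i mod L)).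
      assert (Heqs : shiftn i (alphaY (YG G) p) = shiftn (Z.of_nat t) (alphaY (YG G) p)).
      { apply functional_extensionality; intros jj. unfold shiftn, t. rewrite Z2Nat.id by lia.
        rewrite (Z.div_mod i L) at 1 by lia.
        replace (jj + (L * (i / L) + i mod L)) with ((jj + i mod L) + L * (i / L)) by ring. apply Hap. }
      assert (Hdl : (d (shiftn (Z.of_nat t) (alphaY (YG G) p)) (shiftn i x') < eps)%R).
      { apply HM.
        - unfold t; lia.
        - apply XK_shift; exact HX'.
        - intros jj Hjj. rewrite <- Heqs. unfold shiftn. apply Hx'a. lia. }
      rewrite Heqs. rewrite Rabs_pos_eq.
      + rewrite Hsym; [exact Hdl | apply XK_shift; exact HX' | apply XK_shift; exact HpXK].
      + apply Hnn; [apply XK_shift; exact HX' | apply XK_shift; exact HpXK]. }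
  assert (HRR : regular_ray (YG G) x').
  { split.
    - intros z' [Hz' [N' HN']]. split.
      + pose (K2 := Z.min N' K').
        apply (proj1 (YG_shift_iff G (LK z') K2)).
        change (YG G (LK (shiftn K2 z'))).
        apply (closed_XK G (shiftn K2 z') (shiftn K2 p)).
        * apply XK_shift; exact Hz'.
        * apply YG_shift; exact Hp.
        * intros r Hr. change (z' (r + K2) = alphaY (YG G) (shiftn K2 p) r).
          rewrite HN' by (unfold K2; lia). rewrite Hx'a by (unfold K2; lia). rewrite alpha_shift. reflexivity.
      + exists N'. intros r Hr. unfold LK. rewrite HN' by exact Hr. reflexivity.
    - intros y' [Hy' [N' HN']]. exists (alphaY (YG G) y'). split.
      + split; [apply alpha_XK; exact Hy'|]. exists (Z.min N' K' - 1). intros r Hr.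
        rewrite Hx'a by lia. apply (alpha_agree _ y' p (Z.min N' K')); [|lia].
        intros r' Hr'. rewrite HN' by lia. unfold LK. rewrite Hx'a by lia. reflexivity.
      + apply functional_extensionality; intros r; reflexivity. }
  exists p, x'. split; [exact Hp|]. split; [exact Hper|]. split; [exact HX'|]. split.
  - intros i Hi. rewrite Hx'def. destruct (Z.ltb_spec i N); [lia| reflexivity].
  - split; [exact Hasym| exact HRR].
Qed.
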